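(* Let $\{E_i:i\in\Lambda\}$ be a family of commuting projections in a $C^*$-algebra, let $\mathcal A:=C^*(\{E_i:i\in\Lambda\})$, and let $X$ be the spectrum of $\mathcal A$, identifying $\mathcal A$ with $C_0(X)$ via the Gelfand transform. Then $C_0(X;\mathbb Z)$ equals the ring generated by $\{E_i:i\in\Lambda\}$. If moreover the family $\{E_i\}$ is closed under multiplication, then $C_0(X;\mathbb Z)=\operatorname{span}_{\mathbb Z}\{E_i:i\in\Lambda\}$.
   Context: $C_0(X;\mathbb Z)$ denotes the continuous integer-valued functions on $X$ vanishing at infinity. The ring generated by the $E_i$ means the (not necessarily unital) subring generated by them. *)

(* Defs.v *)
From HB Require Import structures.
From mathcomp Require Import all_boot all_order all_algebra.
From mathcomp Require Import reals.
From mathcomp.real_closed Require Import complex.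
Set Implicit Arguments. Unset Strict Implicit. Unset Printing Implicit Defensive.
Import Order.TTheory GRing.Theory Num.Theory.
Local Open Scope ring_scope.

Record is_Cstar_algebra (R : realType) (A : lmodType R[i])
    (mul : A -> A -> A) (st : A -> A) (nrm : A -> R) : Prop := {
  cs_mulA : forall a b c, mul a (mul b c) = mul (mul a b) c;
  cs_mulDl : forall a b c, mul (a + b) c = mul a c + mul b c;
  cs_mulDr : forall a b c, mul a (b + c) = mul a b + mul a c;
  cs_mulZl : forall (k : R[i]) a b, mul (k *: a) b = k *: mul a b;
  cs_mulZr : forall (k : R[i]) a b, mul a (k *: b) = k *: mul a b;
  cs_stK : forall a, st (st a) = a;
  cs_stD : forall a b, st (a + b) = st a + st b;
  cs_stZ : forall (k : R[i]) a, st (k *: a) = k^* *: st a;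
  cs_stM : forall a b, st (mul a b) = mul (st b) (st a);
  cs_nrm_eq0 : forall a, nrm a = 0 -> a = 0;
  cs_nrmD : forall a b, nrm (a + b) <= nrm a + nrm b;
  cs_nrmZ : forall (k : R[i]) a, ((nrm (k *: a))%:C)%C = `|k| * ((nrm a)%:C)%C;
  cs_nrmM : forall a b, nrm (mul a b) <= nrm a * nrm b;
  cs_Cstar : forall a, nrm (mul (st a) a) = nrm a ^+ 2;
  cs_complete : forall u : nat -> A,
    (forall e : R, 0 < e -> exists N : nat, forall m n : nat,
        (N <= m)%N -> (N <= n)%N -> nrm (u m - u n) < e) ->
    exists l : A, forall e : R, 0 < e -> exists N : nat, forall n : nat,
        (N <= n)%N -> nrm (u n - l) < e
}.

Definition Cstar_gen (R : realType) (A : lmodType R[i])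
    (mul : A -> A -> A) (st : A -> A) (nrm : A -> R)
    (I : Type) (E : I -> A) (a : A) : Prop :=
  forall S : A -> Prop,
    (forall i, S (E i)) ->
    S 0 ->
    (forall x y, S x -> S y -> S (x + y)) ->
    (forall (k : R[i]) x, S x -> S (k *: x)) ->
    (forall x y, S x -> S y -> S (mul x y)) ->
    (forall x, S x -> S (st x)) ->
    (forall x, (forall e : R, 0 < e -> exists y, S y /\ nrm (x - y) < e) -> S x) ->
    S a.

(* Characters of the subalgebra B (= points of the Gelfand spectrum of B):
   nonzero multiplicative linear functionals on B. *)
Definition is_character (R : realType) (A : lmodType R[i])
    (mul : A -> A -> A) (B : A -> Prop) (phi : A -> R[i]) : Prop :=
  [/\ forall a b, B a -> B b -> phi (a + b) = phi a + phi b,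
      forall (k : R[i]) a, B a -> phi (k *: a) = k * phi a,
      forall a b, B a -> B b -> phi (mul a b) = phi a * phi b
    & exists a, B a /\ phi a <> 0].

Inductive ring_gen (R : realType) (A : lmodType R[i])
    (mul : A -> A -> A) (I : Type) (E : I -> A) : A -> Prop :=
  | rg_gen i : ring_gen mul E (E i)
  | rg_0 : ring_gen mul E 0
  | rg_opp x : ring_gen mul E x -> ring_gen mul E (- x)
  | rg_add x y : ring_gen mul E x -> ring_gen mul E y -> ring_gen mul E (x + y)
  | rg_mul x y : ring_gen mul E x -> ring_gen mul E y -> ring_gen mul E (mul x y).

Definition Zspan (R : realType) (A : lmodType R[i]) (I : Type) (E : I -> A)
    (a : A) : Prop :=
  exists s : seq (int * I), a = \sum_(p <- s) (E p.2 *~ p.1).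

(* C_0(X; Z), viewed inside A = C*({E_i}) via the Gelfand transform:
   the elements a of C*({E_i}) whose Gelfand transform  phi |-> phi a
   takes only integer values on the spectrum X. *)
Definition C0_int (R : realType) (A : lmodType R[i])
    (mul : A -> A -> A) (st : A -> A) (nrm : A -> R)
    (I : Type) (E : I -> A) (a : A) : Prop :=
  Cstar_gen mul st nrm E a /\
  forall phi : A -> R[i], is_character mul (Cstar_gen mul st nrm E) phi ->
    exists z : int, phi a = z%:~R.

(* Main.v *)
Require Import Defs.
From HB Require Import structures.
From mathcomp Require Import all_boot all_order all_algebra.
From mathcomp Require Import reals.
From mathcomp.real_closed Require Import complex.
From mathcomp Require Import boolp classical_sets.
From mathcomp Require Import ring lra.
Import Order.TTheory GRing.Theory Num.Theory.
Local Open Scope ring_scope.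
Local Open Scope complex_scope.

Set Implicit Arguments. Unset Strict Implicit. Unset Printing Implicit Defensive.

Section CX. Variable R : realType.
Local Notation nc := (@Normc.normc R).
Lemma nc_ge0 (x : R[i]) : 0 <= nc x.
Proof. by case: x => a b; rewrite /Normc.normc sqrtr_ge0. Qed.
Lemma ncR (r : R) : 0 <= r -> nc (r%:C) = r.
Proof. by move=> h; rewrite /Normc.normc /= expr0n /= addr0 sqrtr_sqr ger0_norm. Qed.
Lemma conj_mul (x : R[i]) : x^* * x = ((nc x) ^+ 2)%:C.
Proof.
case: x => a b; rewrite /Normc.normc sqr_sqrtr ?addr_ge0 ?sqr_ge0 //.
apply/eqP; rewrite eq_complex /=; apply/andP; split; apply/eqP; ring.
Qed.
Lemma u_add (t s : R) : (t +i* s) + (t +i* s)^* = (t *+ 2)%:C.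
Proof. apply/eqP; rewrite eq_complex /=; apply/andP; split; apply/eqP; ring. Qed.
Lemma nc_u (t : R) : 0 <= t <= 1 -> nc (t +i* Num.sqrt (1 - t ^+ 2)) = 1.
Proof.
move=> /andP[h0 h1]; rewrite /Normc.normc sqr_sqrtr; last by nra.
by rewrite addrC subrK sqrtr1.
Qed.
Lemma nc_half : nc (2^-1 : R[i]) = 2^-1.
Proof.
have -> : (2 : R[i]) = (2 : R)%:C by rewrite (rmorph_nat (real_complex R)).
by rewrite Normc.normcV ncR.
Qed.
Lemma ncZ (z : int) : z != 0 -> 1 <= nc (z%:~R).
Proof.
move=> hz; have -> : (z%:~R : R[i]) = (z%:~R : R)%:C by rewrite -(rmorph_int (real_complex R)).
rewrite /Normc.normc /= expr0n /= addr0 sqrtr_sqr -intr_norm.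
by rewrite ler1z -gtz0_ge1 normr_gt0.
Qed.
Lemma nc_le (a b : R) : nc (a +i* b) <= `|a| + `|b|.
Proof.
rewrite /Normc.normc -[X in _ <= X]ger0_norm ?addr_ge0 // -sqrtr_sqr.
apply: ler_wsqrtr; rewrite -(real_normK (num_real a)) -(real_normK (num_real b)) sqrrD.
have := mulr_ge0 (normr_ge0 a) (normr_ge0 b); lra.
Qed.
Lemma Re_le (c : R[i]) : complex.Re c <= nc c.
Proof.
case: c => a b /=; rewrite /Normc.normc; apply: (le_trans (ler_norm a)).
rewrite -sqrtr_sqr; apply: ler_wsqrtr; have := sqr_ge0 b; lra.
Qed.
Lemma Im_le (c : R[i]) : complex.Im c <= nc c.
Proof.
case: c => a b /=; rewrite /Normc.normc; apply: (le_trans (ler_norm b)).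
rewrite -sqrtr_sqr; apply: ler_wsqrtr; have := sqr_ge0 a; lra.
Qed.
Lemma nc_sub_le (a b : R[i]) : nc (a - b) <= nc a + nc b.
Proof. by apply: (le_trans (le_normcD _ _)); rewrite normcN. Qed.
Lemma nc_mul (a b : R[i]) : nc (a * b) = nc a * nc b. Proof. exact: Normc.normcM. Qed.
Lemma nc_zero (z : R[i]) : (forall e : R, 0 < e -> nc z <= e) -> z = 0.
Proof.
move=> h; apply: Normc.eq0_normc; apply/eqP; rewrite eq_le nc_ge0 andbT.
apply/negP => /negP; rewrite -ltNge => hz.
have := h _ (divr_gt0 hz (ltr0n _ 2)); lra.
Qed.
End CX.

Section Main.
Variables (R : realType) (A : lmodType R[i]) (mul : A -> A -> A) (st : A -> A)
  (nrm : A -> R) (HA : is_Cstar_algebra mul st nrm) (I : Type) (E : I -> A)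
  (Eproj : forall i, mul (E i) (E i) = E i /\ st (E i) = E i)
  (Ecomm : forall i j, mul (E i) (E j) = mul (E j) (E i)).

Local Notation nc := (@Normc.normc R).

Lemma EE i : mul (E i) (E i) = E i. Proof. by case: (Eproj i). Qed.
Lemma stE i : st (E i) = E i. Proof. by case: (Eproj i). Qed.

Lemma mm0l x : mul 0 x = 0.
Proof. by rewrite -[X in mul X _](scale0r (0:A)) (cs_mulZl HA) scale0r. Qed.
Lemma mm0r x : mul x 0 = 0.
Proof. by rewrite -[X in mul _ X](scale0r (0:A)) (cs_mulZr HA) scale0r. Qed.
Lemma mmNl x y : mul (- x) y = - mul x y.
Proof. by rewrite -scaleN1r (cs_mulZl HA) scaleN1r. Qed.
Lemma mmNr x y : mul x (- y) = - mul x y.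
Proof. by rewrite -scaleN1r (cs_mulZr HA) scaleN1r. Qed.
Lemma mmBl x y z : mul (x - y) z = mul x z - mul y z.
Proof. by rewrite (cs_mulDl HA) mmNl. Qed.
Lemma mmBr x y z : mul z (x - y) = mul z x - mul z y.
Proof. by rewrite (cs_mulDr HA) mmNr. Qed.
Lemma mmDl x y z : mul (x + y) z = mul x z + mul y z. Proof. exact: (cs_mulDl HA). Qed.
Lemma mmDr x y z : mul z (x + y) = mul z x + mul z y. Proof. exact: (cs_mulDr HA). Qed.
Lemma mmA x y z : mul x (mul y z) = mul (mul x y) z. Proof. exact: (cs_mulA HA). Qed.
Lemma mmZl k x y : mul (k *: x) y = k *: mul x y. Proof. exact: (cs_mulZl HA). Qed.
Lemma mmZr k x y : mul x (k *: y) = k *: mul x y. Proof. exact: (cs_mulZr HA). Qed.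

Lemma mm_suml (T : Type) (s : seq T) (f : T -> A) y :
  mul (\sum_(t <- s) f t) y = \sum_(t <- s) mul (f t) y.
Proof. by apply: (big_morph (fun z => mul z y)) => [a b|]; rewrite ?mmDl ?mm0l. Qed.
Lemma mm_sumr (T : Type) (s : seq T) (f : T -> A) y :
  mul y (\sum_(t <- s) f t) = \sum_(t <- s) mul y (f t).
Proof. by apply: (big_morph (fun z => mul y z)) => [a b|]; rewrite ?mmDr ?mm0r. Qed.

Lemma st0 : st 0 = 0.
Proof. by rewrite -[X in st X](scale0r (0:A)) (cs_stZ HA) raddf0 scale0r. Qed.
Lemma stD x y : st (x + y) = st x + st y. Proof. exact: (cs_stD HA). Qed.
Lemma stZ k x : st (k *: x) = k^* *: st x. Proof. exact: (cs_stZ HA). Qed.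
Lemma stN x : st (- x) = - st x.
Proof. by rewrite -scaleN1r stZ rmorphN1 scaleN1r. Qed.
Lemma stB x y : st (x - y) = st x - st y. Proof. by rewrite stD stN. Qed.
Lemma stM x y : st (mul x y) = mul (st y) (st x). Proof. exact: (cs_stM HA). Qed.
Lemma stK x : st (st x) = x. Proof. exact: (cs_stK HA). Qed.
Lemma st_sum (T : Type) (s : seq T) (f : T -> A) :
  st (\sum_(t <- s) f t) = \sum_(t <- s) st (f t).
Proof. by apply: (big_morph st) => [a b|]; rewrite ?stD ?st0. Qed.

Lemma nrmZ k x : nrm (k *: x) = nc k * nrm x.
Proof. by apply: complexI; rewrite rmorphM /= (cs_nrmZ HA). Qed.
Lemma nrm0 : nrm 0 = 0.
Proof. by rewrite -[X in nrm X](scale0r (0:A)) nrmZ Normc.normc0 mul0r. Qed.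
Lemma nrmD x y : nrm (x + y) <= nrm x + nrm y. Proof. exact: (cs_nrmD HA). Qed.
Lemma nrmN x : nrm (- x) = nrm x.
Proof. by rewrite -scaleN1r nrmZ normcN Normc.normc1 mul1r. Qed.
Lemma nrm_ge0 x : 0 <= nrm x.
Proof. have := nrmD x (- x); rewrite subrr nrm0 nrmN. lra. Qed.
Lemma nrmB x y : nrm (x - y) = nrm (y - x).
Proof. by rewrite -nrmN opprB. Qed.
Lemma nrmM x y : nrm (mul x y) <= nrm x * nrm y. Proof. exact: (cs_nrmM HA). Qed.
Lemma nrm_eq0 x : nrm x = 0 -> x = 0. Proof. exact: (cs_nrm_eq0 HA). Qed.
Lemma nrm_st x : nrm (st x) = nrm x.
Proof.
suff H : forall y, nrm y <= nrm (st y).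
  by apply/eqP; rewrite eq_le H -{2}(stK x) H.
move=> y; have := cs_Cstar HA y; have := nrmM (st y) y.
have := nrm_ge0 y; have := nrm_ge0 (st y).
have [->|yp] := eqVneq (nrm y) 0; first by move=> ? _ _ _.
move=> h1 h2 h3 h4; rewrite h4 expr2 in h3.
have yp' : 0 < nrm y by rewrite lt_def yp h2.
by rewrite -(ler_pM2r yp').
Qed.
Lemma nrm_sum (T : Type) (s : seq T) (f : T -> A) :
  nrm (\sum_(t <- s) f t) <= \sum_(t <- s) nrm (f t).
Proof.
elim: s => [|t s IH]; first by rewrite !big_nil nrm0.
rewrite !big_cons; apply: (le_trans (nrmD _ _)); exact: lerD.
Qed.


Definition Cm y := forall i, mul (E i) y = mul y (E i).
Definition Mop (p : I * bool) x := if p.2 then mul (E p.1) x else x - mul (E p.1) x.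
Definition T (l : seq (I * bool)) x := foldr Mop x l.

Lemma EEx i j x : mul (E i) (mul (E j) x) = mul (E j) (mul (E i) x).
Proof. by rewrite !mmA Ecomm. Qed.
Lemma EEi i x : mul (E i) (mul (E i) x) = mul (E i) x.
Proof. by rewrite mmA EE. Qed.

Lemma Mop_D p x y : Mop p (x + y) = Mop p x + Mop p y.
Proof. rewrite /Mop; case: p.2; rewrite mmDr //. by rewrite opprD addrACA. Qed.
Lemma Mop_Z p k x : Mop p (k *: x) = k *: Mop p x.
Proof. rewrite /Mop; case: p.2; rewrite mmZr //. by rewrite scalerBr. Qed.
Lemma Mop_0 p : Mop p 0 = 0.
Proof. by rewrite /Mop; case: p.2; rewrite mm0r // subrr. Qed.
Lemma Mop_N p x : Mop p (- x) = - Mop p x.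
Proof. by rewrite -scaleN1r Mop_Z scaleN1r. Qed.
Lemma Mop_B p x y : Mop p (x - y) = Mop p x - Mop p y.
Proof. by rewrite Mop_D Mop_N. Qed.
Lemma Mop_mulr p x y : Mop p (mul x y) = mul (Mop p x) y.
Proof. by rewrite /Mop; case: p.2; rewrite ?mmBl mmA. Qed.
Lemma Mop_El p j x : Mop p (mul (E j) x) = mul (E j) (Mop p x).
Proof. by rewrite /Mop; case: p.2; rewrite ?mmBr EEx. Qed.
Lemma Mop_comm p q x : Mop p (Mop q x) = Mop q (Mop p x).
Proof.
case: p => i b; case: q => j c; rewrite /Mop /=.
case: b; case: c; rewrite ?mmBr ?[mul (E i) (mul (E j) x)]EEx //.
by rewrite !opprB !addrA [LHS]addrAC [RHS]addrAC (addrAC x (- mul (E j) x)).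
Qed.
Lemma Mop_idem p x : Mop p (Mop p x) = Mop p x.
Proof.
case: p => i [] /=; rewrite /Mop /=; first exact: EEi.
by rewrite mmBr EEi subrr subr0.
Qed.
Lemma Mop_orth i b x : Mop (i, b) (Mop (i, ~~ b) x) = 0.
Proof. by rewrite /Mop /=; case: b => /=; rewrite ?mmBr EEi subrr. Qed.
Lemma Mop_split i x : Mop (i, true) x + Mop (i, false) x = x.
Proof. by rewrite /Mop /= addrC subrK. Qed.
Lemma Mop_E i b x : mul (E i) (Mop (i, b) x) = if b then Mop (i, b) x else 0.
Proof. by rewrite /Mop /=; case: b; rewrite ?EEi // mmBr EEi subrr. Qed.

Lemma Cm0 : Cm 0. Proof. by move=> i; rewrite mm0l mm0r. Qed.
Lemma CmD x y : Cm x -> Cm y -> Cm (x + y).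
Proof. by move=> hx hy i; rewrite mmDl mmDr hx hy. Qed.
Lemma CmZ k x : Cm x -> Cm (k *: x).
Proof. by move=> hx i; rewrite mmZl mmZr hx. Qed.
Lemma CmN x : Cm x -> Cm (- x).
Proof. by move=> hx i; rewrite mmNl mmNr hx. Qed.
Lemma CmB x y : Cm x -> Cm y -> Cm (x - y).
Proof. by move=> hx hy; apply: CmD => //; apply: CmN. Qed.
Lemma CmM x y : Cm x -> Cm y -> Cm (mul x y).
Proof. by move=> hx hy i; rewrite mmA hx -mmA hy mmA. Qed.
Lemma CmE j : Cm (E j). Proof. by move=> i; rewrite Ecomm. Qed.
Lemma Cm_Mop p x : Cm x -> Cm (Mop p x).
Proof. by move=> hx; rewrite /Mop; case: p.2; [apply: CmM; [apply: CmE|]|apply: CmB => //; apply: CmM => //; apply: CmE]. Qed.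
Lemma Cm_st x : Cm x -> Cm (st x).
Proof.
move=> hx i; apply: (can_inj stK); rewrite !stM stK stE; exact/esym/hx.
Qed.
Lemma st_Mop p x : Cm x -> st (Mop p x) = Mop p (st x).
Proof.
move=> hx; have hs := Cm_st hx.
by rewrite /Mop; case: p.2; rewrite ?stB stM stE hs.
Qed.

Lemma T_cat l l' x : T (l ++ l') x = T l (T l' x).
Proof. by rewrite /T foldr_cat. Qed.
Lemma T_cons p l x : T (p :: l) x = Mop p (T l x). Proof. by []. Qed.
Lemma T_D l x y : T l (x + y) = T l x + T l y.
Proof. by elim: l => //= p l ->; rewrite Mop_D. Qed.
Lemma T_Z l k x : T l (k *: x) = k *: T l x.
Proof. by elim: l => //= p l ->; rewrite Mop_Z. Qed.
Lemma T_0 l : T l 0 = 0.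
Proof. by elim: l => //= p l ->; rewrite Mop_0. Qed.
Lemma T_N l x : T l (- x) = - T l x.
Proof. by rewrite -scaleN1r T_Z scaleN1r. Qed.
Lemma T_B l x y : T l (x - y) = T l x - T l y.
Proof. by rewrite T_D T_N. Qed.
Lemma T_sum l (X : Type) (s : seq X) (f : X -> A) :
  T l (\sum_(t <- s) f t) = \sum_(t <- s) T l (f t).
Proof. by apply: (big_morph (T l)) => [a b|]; rewrite ?T_D ?T_0. Qed.
Lemma T_mulr l x y : T l (mul x y) = mul (T l x) y.
Proof. by elim: l => //= p l ->; rewrite Mop_mulr. Qed.
Lemma T_El l j x : T l (mul (E j) x) = mul (E j) (T l x).
Proof. by elim: l => //= p l ->; rewrite Mop_El. Qed.
Lemma T_Mop l p x : Mop p (T l x) = T l (Mop p x).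
Proof. by elim: l => //= q l <-; rewrite Mop_comm. Qed.
Lemma T_comm l l' x : T l (T l' x) = T l' (T l x).
Proof. by elim: l => //= p l ->; rewrite T_Mop. Qed.
Lemma Cm_T l x : Cm x -> Cm (T l x).
Proof. by move=> hx; elim: l => //= p l IH; apply: Cm_Mop. Qed.
Lemma st_T l x : Cm x -> st (T l x) = T l (st x).
Proof. by move=> hx; elim: l => //= p l IH; rewrite st_Mop ?IH //; apply: Cm_T. Qed.
Lemma T_absorb l p x : List.In p l -> Mop p (T l x) = T l x.
Proof.
elim: l => //= q l IH [->|H]; first by rewrite Mop_idem.
by rewrite Mop_comm IH.
Qed.
Lemma T_sub l1 l x : (forall p, List.In p l1 -> List.In p l) -> T l1 (T l x) = T l x.
Proof.
elim: l1 => //= p l1 IH H; rewrite IH; first by apply: T_absorb; apply: H; left.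
by move=> q hq; apply: H; right.
Qed.
Lemma T_E l i b x : List.In (i, b) l -> mul (E i) (T l x) = if b then T l x else 0.
Proof. by move=> H; rewrite -(T_absorb x H) Mop_E; case: (b). Qed.


Fixpoint bassign n : seq (seq bool) :=
  if n is n'.+1 then map (cons true) (bassign n') ++ map (cons false) (bassign n')
  else [:: [::]].

Lemma bassignS n bs : bs \in bassign n.+1 ->
  exists b bs1, bs = b :: bs1 /\ bs1 \in bassign n.
Proof.
rewrite /= mem_cat => /orP[] /mapP[bs1 h ->]; by [exists true, bs1|exists false, bs1].
Qed.

Lemma size_bassign n bs : bs \in bassign n -> size bs = n.
Proof.
elim: n bs => [|n IH] bs; first by rewrite inE => /eqP ->.
by case/bassignS => b [bs1 [-> h]] /=; rewrite IH.
Qed.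

Lemma uniq_bassign n : uniq (bassign n).
Proof.
elim: n => //= n IH; rewrite cat_uniq.
rewrite (map_inj_uniq (fun a b (h : true :: a = true :: b) => congr1 behead h)).
rewrite (map_inj_uniq (fun a b (h : false :: a = false :: b) => congr1 behead h)) IH /=.
rewrite andbT; apply/hasPn => bs /mapP[bs1 _ ->]; apply/mapP => -[? _] //.
Qed.

Lemma T_decomp F x : x = \sum_(bs <- bassign (size F)) T (zip F bs) x.
Proof.
elim: F x => [|i F IH] x /=; first by rewrite big_seq1.
rewrite big_cat !big_map /= -big_split /= {1}(IH x); apply: eq_bigr => bs _.
by rewrite Mop_split.
Qed.

Lemma T_orth F bs bs' x : bs \in bassign (size F) -> bs' \in bassign (size F) ->
  bs != bs' -> T (zip F bs) (T (zip F bs') x) = 0.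
Proof.
elim: F bs bs' => [|i F IH] bs bs' /=.
  by rewrite !inE => /eqP -> /eqP ->; rewrite eqxx.
case/bassignS => b [bs1 [-> h1]]; case/bassignS => b' [bs1' [-> h1']] hne.
change (T ((i,b) :: zip F bs1) (T ((i,b') :: zip F bs1') x) = 0).
rewrite !T_cons -T_Mop.
have [eb|nb] := eqVneq b b'.
  subst b'; have hne' : bs1 != bs1' by apply: contraNneq hne => ->.
  by rewrite IH // !Mop_0.
have -> : b' = ~~ b by case: b b' nb {hne} => [] [].
by rewrite Mop_orth.
Qed.

Fixpoint pick (F : seq I) (bs : seq bool) : option I :=
  match F, bs with
  | i :: F', b :: bs' => if b then Some i else pick F' bs'
  | _, _ => None
  end.

Lemma pick_in F bs j : pick F bs = Some j -> List.In (j, true) (zip F bs).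
Proof.
elim: F bs => [|i F IH] [|b bs] //=; case: b => [[<-]|h]; [by left|right; exact: IH].
Qed.

Lemma pick_none F bs : pick F bs = None ->
  forall i b, List.In (i, b) (zip F bs) -> b = false.
Proof.
elim: F bs => [|i F IH] [|b bs] //=; case: b => // h k c [[_ <-] //|]; exact: IH.
Qed.

Lemma zip_in (F : seq I) (bs : seq bool) (i : I) : size bs = size F -> List.In i F ->
  exists b : bool, List.In (i, b) (zip F bs).
Proof.
elim: F bs => [|j F IH] [|b bs] //= [hs] [->|h]; first by exists b; left.
by case: (IH bs hs h) => c hc; exists c; right.
Qed.

Definition Aat F bs := if pick F bs is Some j then T (zip F bs) (E j) else 0.

Inductive spanF (F : seq I) : A -> Prop :=
  | sp_E i : List.In i F -> spanF F (E i)
  | sp_0 : spanF F 0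
  | sp_add x y : spanF F x -> spanF F y -> spanF F (x + y)
  | sp_scale k x : spanF F x -> spanF F (k *: x)
  | sp_mul x y : spanF F x -> spanF F y -> spanF F (mul x y).

Lemma Cm_span F y : spanF F y -> Cm y.
Proof.
elim=> *; by [apply: CmE|apply: Cm0|apply: CmD|apply: CmZ|apply: CmM].
Qed.

Lemma st_span F y : spanF F y -> spanF F (st y).
Proof.
elim=> [i h|||k x1 _ h|x1 y1 _ hx _ hy].
- by rewrite stE; apply: sp_E.
- by rewrite st0; apply: sp_0.
- by move=> x1 y1 _ hx _ hy; rewrite stD; apply: sp_add.
- by rewrite stZ; apply: sp_scale.
- by rewrite stM; apply: sp_mul.
Qed.

Lemma span_mono F G y : (forall i, List.In i F -> List.In i G) ->
  spanF F y -> spanF G y.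
Proof.
move=> hFG; elim=> [i h|||k x1 _ h|x1 y1 _ hx _ hy].
- by apply: sp_E; apply: hFG.
- exact: sp_0.
- by move=> x1 y1 _ hx _ hy; apply: sp_add.
- exact: sp_scale.
- exact: sp_mul.
Qed.

Lemma T_EE l i j : List.In (i, true) l -> List.In (j, true) l ->
  T l (E i) = T l (E j).
Proof.
move=> hi hj.
rewrite -(T_E (E i) hj) -T_El Ecomm T_El (T_E _ hi); by [].
Qed.

Lemma span_val F bs y : spanF F y -> size bs = size F ->
  exists c, T (zip F bs) y = c *: Aat F bs.
Proof.
move=> hy hs; rewrite /Aat; elim: hy.
- move=> i hi; case: (zip_in hs hi) => b hb.
  case hp: (pick F bs) => [j|].
    case: b hb => hb.
      by exists 1; rewrite scale1r; apply: T_EE => //; apply: pick_in.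
    exists 0; rewrite scale0r -EE T_El (T_E _ hb); by [].
  have hb0 := pick_none hp hb; subst b.
  by exists 0; rewrite scale0r -EE T_El (T_E _ hb).
- by exists 0; rewrite scale0r T_0.
- move=> x z _ [c hc] _ [c' hc']; exists (c + c').
  by rewrite T_D hc hc' scalerDl.
- move=> k x _ [c hc]; exists (k * c); by rewrite T_Z hc scalerA.
- move=> x z _ [c hc] hz [c' hc']; rewrite T_mulr hc.
  case hp: (pick F bs) => [j|] in hc hc' *; move: hc hc' => /= hc hc'; last first.
    by exists 0; rewrite scaler0 mm0l scaler0.
  exists (c * c'); rewrite mmZl -T_mulr (Cm_span hz) T_mulr hc' mmZl.
  by rewrite -T_mulr EE scalerA.
Qed.

Lemma Aat_Cm F bs : Cm (Aat F bs).
Proof. rewrite /Aat; case: pick => [j|]; [apply: Cm_T; apply: CmE|apply: Cm0]. Qed.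

Lemma Aat_idem F bs : mul (Aat F bs) (Aat F bs) = Aat F bs.
Proof.
rewrite /Aat; case: pick => [j|]; last by rewrite mm0l.
by rewrite -T_mulr -T_El EE (T_sub _ (fun p h => h)).
Qed.

Lemma Aat_st F bs : st (Aat F bs) = Aat F bs.
Proof.
rewrite /Aat; case: pick => [j|]; last exact: st0.
by rewrite st_T ?stE //; apply: CmE.
Qed.

Lemma Aat_orth F bs bs' : bs \in bassign (size F) -> bs' \in bassign (size F) ->
  bs != bs' -> mul (Aat F bs) (Aat F bs') = 0.
Proof.
move=> h h' hne; rewrite /Aat.
case: (pick F bs) => [j|]; last by rewrite mm0l.
case: (pick F bs') => [j'|]; last by rewrite mm0r.
by rewrite -T_mulr -T_El T_orth.
Qed.

Lemma ring_Mop p x : ring_gen mul E x -> ring_gen mul E (Mop p x).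
Proof.
move=> h; rewrite /Mop; case: p.2; first by apply: rg_mul => //; apply: rg_gen.
by apply: rg_add => //; apply: rg_opp; apply: rg_mul => //; apply: rg_gen.
Qed.

Lemma ring_T l x : ring_gen mul E x -> ring_gen mul E (T l x).
Proof. by move=> h; elim: l => //= p l IH; apply: ring_Mop. Qed.

Lemma ring_Aat F bs : ring_gen mul E (Aat F bs).
Proof.
rewrite /Aat; case: pick => [j|]; [apply: ring_T; apply: rg_gen|apply: rg_0].
Qed.


Section Max.
Variables (s : seq (seq bool)) (Af : seq bool -> A).
Hypotheses (hu : uniq s)
  (hid : forall bs, bs \in s -> mul (Af bs) (Af bs) = Af bs)
  (hst : forall bs, bs \in s -> st (Af bs) = Af bs)
  (hor : forall bs bs', bs \in s -> bs' \in s -> bs != bs' -> mul (Af bs) (Af bs') = 0).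

Definition SS (d : seq bool -> R[i]) := \sum_(bs <- s) d bs *: Af bs.

Lemma eq_SS d d' : (forall bs, bs \in s -> d bs = d' bs) -> SS d = SS d'.
Proof. by move=> h; rewrite /SS !big_seq; apply: eq_bigr => bs hb; rewrite h. Qed.

Lemma st_SS d : st (SS d) = SS (fun bs => (d bs)^*).
Proof.
rewrite /SS st_sum !big_seq; apply: eq_bigr => bs hb; by rewrite stZ hst.
Qed.

Lemma mul_SS d d' : mul (SS d) (SS d') = SS (fun bs => d bs * d' bs).
Proof.
rewrite /SS mm_suml big_seq [in RHS]big_seq; apply: eq_bigr => bs hb.
rewrite mmZl mm_sumr (bigD1_seq bs) //= mmZr hid // big1_seq ?addr0 ?scalerA //.
by move=> bs' /andP[hne hb']; rewrite mmZr hor ?scaler0 // eq_sym.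
Qed.

Lemma nrm_SS_sq d : nrm (SS d) ^+ 2 = nrm (SS (fun bs => ((nc (d bs)) ^+ 2)%:C)).
Proof.
rewrite -(cs_Cstar HA) st_SS mul_SS; congr nrm; apply: eq_SS => bs _.
by rewrite conj_mul.
Qed.

Lemma nrm_P : nrm (SS (fun _ => 1)) <= 1.
Proof.
have h := nrm_SS_sq (fun _ => 1); rewrite Normc.normc1 expr1n in h.
have := nrm_ge0 (SS (fun _ => 1)); nra.
Qed.

Lemma nrm_unimod u : (forall bs, bs \in s -> nc (u bs) = 1) -> nrm (SS u) <= 1.
Proof.
move=> hu1; have h := nrm_SS_sq u.
rewrite (@eq_SS (fun bs => ((nc (u bs)) ^+ 2)%:C) (fun _ => 1)) in h; last first.
  by move=> bs hb /=; rewrite hu1 // expr1n.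
have := nrm_P; have := nrm_ge0 (SS u); nra.
Qed.

Lemma nrm_real t : (forall bs, bs \in s -> 0 <= t bs <= 1) ->
  nrm (SS (fun bs => (t bs)%:C)) <= 1.
Proof.
move=> ht; pose u bs := t bs +i* Num.sqrt (1 - t bs ^+ 2).
have hu1 : forall bs, bs \in s -> nc (u bs) = 1 by move=> bs hb; apply: nc_u; apply: ht.
have -> : SS (fun bs => (t bs)%:C) = 2^-1 *: (SS u + st (SS u)).
  rewrite st_SS /SS -big_split scaler_sumr; apply: eq_bigr => bs _ /=.
  rewrite -scalerDl scalerA u_add; congr (_ *: _).
  rewrite (rmorphMn (real_complex R)) -[(t bs)%:C *+ 2]mulr_natl mulKf //.
  by rewrite pnatr_eq0.
rewrite nrmZ nc_half; have := nrmD (SS u) (st (SS u)); rewrite nrm_st.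
have := nrm_unimod hu1; have := nrm_ge0 (SS u + st (SS u)). nra.
Qed.

Lemma nrm_SS_le d m : 0 <= m -> (forall bs, bs \in s -> Af bs != 0 -> nc (d bs) <= m) ->
  nrm (SS d) <= m.
Proof.
move=> hm hd; pose d' bs := if Af bs == 0 then 0 else d bs.
have -> : SS d = SS d'.
  rewrite /SS; apply: eq_bigr => bs _; rewrite /d'.
  by case: eqP => [->|//]; rewrite !scaler0.
have hd' : forall bs, bs \in s -> nc (d' bs) <= m.
  move=> bs hb; rewrite /d'; case: eqP => [_|/eqP h]; last exact: hd.
  by rewrite Normc.normc0.
have [m0|mp] := eqVneq m 0.
  have -> : SS d' = 0.
    rewrite /SS big_seq big1 // => bs hb.
    have : nc (d' bs) = 0 by apply/eqP; rewrite eq_le nc_ge0 andbT -m0 hd'.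
    by move/Normc.eq0_normc => ->; rewrite scale0r.
  by rewrite nrm0 m0.
have mpos : 0 < m by rewrite lt_def mp hm.
pose t bs := (nc (d' bs)) ^+ 2 / m ^+ 2.
have ht : forall bs, bs \in s -> 0 <= t bs <= 1.
  move=> bs hb; rewrite /t divr_ge0 ?sqr_ge0 //= ler_pdivrMr ?exprn_gt0 // mul1r.
  by rewrite ler_sqr ?nnegrE ?nc_ge0 ?hd' // ltW.
have h := nrm_SS_sq d'.
have : SS (fun bs => ((nc (d' bs)) ^+ 2)%:C) = (m ^+ 2)%:C *: SS (fun bs => (t bs)%:C).
  rewrite /SS scaler_sumr; apply: eq_bigr => bs _; rewrite scalerA -rmorphM /t.
  by rewrite mulrC divfK // expf_neq0.
move=> e; rewrite e nrmZ ncR ?sqr_ge0 // in h.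
have := nrm_real ht; have := nrm_ge0 (SS d'); have := nrm_ge0 (SS (fun bs => (t bs)%:C)).
nra.
Qed.

End Max.


Lemma In_cat (X : Type) (F G : seq X) x : List.In x (F ++ G) <-> List.In x F \/ List.In x G.
Proof.
elim: F => [|a F IH] /=; first by split=> [h|[[]|h]] //; right.
split=> [[->|h]|[[->|h]|h]]; [by left; left| |by left|by right; apply/IH; left|by right; apply/IH; right].
by case/IH: h => h; [left; right|right].
Qed.

Lemma In_map (X Y : Type) (f : X -> Y) (F : seq X) y :
  List.In y (map f F) -> exists x, y = f x /\ List.In x F.
Proof.
elim: F => [|a F IH] //= [<-|h]; first by exists a; split=> //; left.
by case: (IH h) => x [-> hx]; exists x; split=> //; right.
Qed.

Definition Span y := exists G, spanF G y.
Definition clS x := forall e : R, 0 < e -> exists y, Span y /\ nrm (x - y) < e.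

Lemma span_catl F G y : spanF F y -> spanF (F ++ G) y.
Proof. by apply: span_mono => i h; apply/In_cat; left. Qed.
Lemma span_catr F G y : spanF G y -> spanF (F ++ G) y.
Proof. by apply: span_mono => i h; apply/In_cat; right. Qed.

Lemma Span_add y z : Span y -> Span z -> Span (y + z).
Proof. by case=> F hy [G hz]; exists (F ++ G); apply: sp_add; [apply: span_catl|apply: span_catr]. Qed.
Lemma Span_mul y z : Span y -> Span z -> Span (mul y z).
Proof. by case=> F hy [G hz]; exists (F ++ G); apply: sp_mul; [apply: span_catl|apply: span_catr]. Qed.
Lemma Span_scale k y : Span y -> Span (k *: y).
Proof. by case=> F hy; exists F; apply: sp_scale. Qed.
Lemma Span_st y : Span y -> Span (st y).
Proof. by case=> F hy; exists F; apply: st_span. Qed.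
Lemma Span_E i : Span (E i).
Proof. by exists [:: i]; apply: sp_E; left. Qed.
Lemma Span_0 : Span 0.
Proof. by exists [::]; apply: sp_0. Qed.

Lemma nrm_subD x x' y y' : nrm (x + x' - (y + y')) <= nrm (x - y) + nrm (x' - y').
Proof. by rewrite opprD addrACA; apply: nrmD. Qed.

Lemma nrm_tri x y z : nrm (x - z) <= nrm (x - y) + nrm (y - z).
Proof. have -> : x - z = (x - y) + (y - z) by rewrite addrA subrK. exact: nrmD. Qed.

Lemma mul_diff x x' y y' :
  nrm (mul x x' - mul y y') <= nrm x * nrm (x' - y') + nrm (x - y) * nrm y'.
Proof.
have -> : mul x x' - mul y y' = mul x (x' - y') + mul (x - y) y'.
  by rewrite mmBr mmBl addrA subrK.
apply: (le_trans (nrmD _ _)); apply: lerD; apply: nrmM.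
Qed.

Lemma small_div (a d e : R) : 0 <= a -> 0 <= d -> d < e / (a + 1) -> a * d <= e.
Proof.
move=> ha hd; rewrite ltr_pdivlMr ?ltr_wpDl // => h; nra.
Qed.

Lemma div_pos (a e : R) : 0 <= a -> 0 < e -> 0 < e / (a + 1).
Proof. by move=> ha he; rewrite divr_gt0 // ltr_wpDl. Qed.

Lemma Cstar_clS x : Cstar_gen mul st nrm E x -> clS x.
Proof.
apply.
- move=> i e he; exists (E i); split; first exact: Span_E.
  by rewrite subrr nrm0.
- move=> e he; exists 0; split; first exact: Span_0.
  by rewrite subrr nrm0.
- move=> u v hu hv e he; have he2 : 0 < e / 2 by rewrite divr_gt0.
  case: (hu _ he2) => y [hy hy']; case: (hv _ he2) => z [hz hz'].
  exists (y + z); split; first exact: Span_add.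
  by apply: (le_lt_trans (nrm_subD _ _ _ _)); lra.
- move=> k u hu e he; have hnk := nc_ge0 k.
  case: (hu _ (div_pos hnk he)) => y [hy hy']; exists (k *: y); split; first exact: Span_scale.
  rewrite -scalerBr nrmZ.
  have := small_div hnk (nrm_ge0 _) hy'.
  have : nrm (u - y) * (nc k + 1) < e by rewrite -ltr_pdivlMr // ltr_wpDl.
  nra.
- move=> u v hu hv e he; have he2 : 0 < e / 2 by rewrite divr_gt0.
  case: (hv _ (div_pos (nrm_ge0 u) he2)) => z [hz hz'].
  case: (hu _ (div_pos (nrm_ge0 z) he2)) => y [hy hy'].
  exists (mul y z); split; first exact: Span_mul.
  apply: (le_lt_trans (mul_diff _ _ _ _)).
  have h1 := small_div (nrm_ge0 u) (nrm_ge0 _) hz'.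
  have h2 := small_div (nrm_ge0 z) (nrm_ge0 _) hy'.
  have : nrm (v - z) * (nrm u + 1) < e / 2 by rewrite -ltr_pdivlMr // ltr_wpDl ?nrm_ge0.
  have : nrm (u - y) * (nrm z + 1) < e / 2 by rewrite -ltr_pdivlMr // ltr_wpDl ?nrm_ge0.
  have := nrm_ge0 u; have := nrm_ge0 z; have := nrm_ge0 (u - y); have := nrm_ge0 (v - z).
  nra.
- move=> u hu e he; case: (hu _ he) => y [hy hy']; exists (st y); split; first exact: Span_st.
  by rewrite -stB nrm_st.
- move=> u hu e he; have he2 : 0 < e / 2 by rewrite divr_gt0.
  case: (hu _ he2) => y [hy hy']; case: (hy _ he2) => z [hz hz'].
  exists z; split=> //; apply: (le_lt_trans (nrm_tri u y z)); lra.
Qed.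


Lemma Re_B (c c' : R[i]) : complex.Re (c - c') = complex.Re c - complex.Re c'.
Proof. by case: c; case: c'. Qed.
Lemma Im_B (c c' : R[i]) : complex.Im (c - c') = complex.Im c - complex.Im c'.
Proof. by case: c; case: c'. Qed.

Local Open Scope classical_set_scope.
Section Char.
Variables (x0 : A) (hx0 : x0 <> 0) (hCm0 : Cm x0) (hid0 : mul x0 x0 = x0)
  (hB0 : Cstar_gen mul st nrm E x0).

Definition allP (L : set (I * bool)) (l : seq (I * bool)) :=
  forall p, List.In p l -> L p.
Definition consistent (L : set (I * bool)) := forall l, allP L l -> T l x0 <> 0.

Lemma chain_in (F : set (set (I * bool))) : total_on F subset ->
  forall l, allP (\bigcup_(X in F) X) l -> l = [::] \/ exists X, F X /\ allP X l.
Proof.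
move=> ht; elim=> [|p l IH] hl; first by left.
right; case: (hl p (or_introl erefl)) => X1 FX1 X1p.
have hl' : allP (\bigcup_(X in F) X) l by move=> q hq; apply: hl; right.
case: (IH hl') => [->|[X2 [FX2 hX2]]].
  by exists X1; split=> // q [<-|[]].
case: (ht X1 X2 FX1 FX2) => hs.
  by exists X2; split=> // q [<-|hq]; [exact: hs|exact: hX2 q hq].
by exists X1; split=> // q [<-|hq]; [done|exact: hs _ (hX2 q hq)].
Qed.

Lemma exists_max : exists L, consistent L /\ forall B, L `<` B -> ~ consistent B.
Proof.
have [|L [hL hmax]] := @Zorn_bigcup (I * bool) consistent.
  move=> F FP ht l hl; case: (chain_in ht hl) => [->|[X [FX hX]]]; first exact: hx0.
  exact: FP X FX l hX.
by exists L.
Qed.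

Section Max2.
Variables (L : set (I * bool)) (hL : consistent L)
  (hmax : forall B, L `<` B -> ~ consistent B).

Lemma strip a l x : allP (L `|` [set a]) l ->
  exists l', allP L l' /\ Mop a (T l' x) = Mop a (T l x).
Proof.
elim: l => [|p l IH] h; first by exists [::]; split=> // p [].
have h' : allP (L `|` [set a]) l by move=> q hq; apply: h; right.
case: (IH h') => l' [hl' e].
case: (h p (or_introl erefl)) => [Lp|/= ->].
  exists (p :: l'); split; first by move=> q [<-|hq]; [exact: Lp|exact: hl' q hq].
  by rewrite (@T_cons p l' x) (@T_cons p l x) [LHS]Mop_comm e [LHS]Mop_comm.
by exists l'; split=> //; rewrite Mop_idem e.
Qed.

Lemma proper_add a : ~ L a -> L `<` L `|` [set a].
Proof. by move=> h; split; [move=> q hq; left|move=> hs; apply: h; apply: hs; right]. Qed.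

Lemma total i : L (i, true) \/ L (i, false).
Proof.
case: (pselect (L (i, true))) => ht; first by left.
case: (pselect (L (i, false))) => hf; first by right.
exfalso; apply: (hmax (proper_add ht)) => l1 hl1 h1.
apply: (hmax (proper_add hf)) => l2 hl2 h2.
case: (strip x0 hl1) => l1' [hl1' e1]; case: (strip x0 hl2) => l2' [hl2' e2].
rewrite h1 Mop_0 in e1; rewrite h2 Mop_0 in e2.
have hall : allP L (l1' ++ l2') by move=> q /In_cat [] hq; [apply: hl1'|apply: hl2'].
apply: (hL hall); rewrite -(Mop_split i (T _ x0)) T_cat.
have E1 : Mop (i, true) (T l1' (T l2' x0)) = 0 by rewrite T_comm T_Mop e1 T_0.
have E2 : Mop (i, false) (T l1' (T l2' x0)) = 0 by rewrite T_Mop e2 T_0.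
by rewrite E1 E2 addr0.
Qed.

Definition chi i : bool := `[< L (i, true) >].
Definition lit F := [seq (i, chi i) | i <- F].

Lemma allP_lit F : allP L (lit F).
Proof.
move=> p hp; case: (In_map hp) => i [-> _]; rewrite /chi; case: (asboolP (L (i, true))) => // h.
by case: (total i).
Qed.

Definition Q F := T (lit F) x0.
Lemma Q_ne0 F : Q F <> 0. Proof. exact: (hL (@allP_lit F)). Qed.
Lemma Q_cat G F : Q (G ++ F) = T (lit G) (Q F).
Proof. by rewrite /Q /lit map_cat T_cat. Qed.
Lemma Q_catC F G : Q (F ++ G) = Q (G ++ F).
Proof. by rewrite !Q_cat /Q T_comm. Qed.

Definition ValF F y c := mul (Q F) y = c *: Q F.
Definition Val y c := exists F, ValF F y c.

Lemma ValF_ext F G y c : ValF F y c -> ValF (G ++ F) y c.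
Proof. by rewrite /ValF Q_cat -T_mulr => ->; rewrite T_Z. Qed.
Lemma ValF_extr F G y c : ValF F y c -> ValF (F ++ G) y c.
Proof. by move=> h; have := ValF_ext G h; rewrite /ValF Q_catC. Qed.
Lemma Val2 y c y' c' : Val y c -> Val y' c' -> exists F, ValF F y c /\ ValF F y' c'.
Proof. by case=> F1 h1 [F2 h2]; exists (F2 ++ F1); split; [exact: ValF_ext|exact: ValF_extr]. Qed.

Lemma Val_uniq y c c' : Val y c -> Val y c' -> c = c'.
Proof.
move=> h h'; case: (Val2 h h') => F [e e']; rewrite /ValF e in e'.
apply/eqP; rewrite -subr_eq0; apply/eqP.
have : (c - c') *: Q F = 0 by rewrite scalerBl e' subrr.
move/eqP; rewrite scaler_eq0 => /orP[/eqP //|/eqP h0]; by case: (Q_ne0 h0).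
Qed.

Lemma Val_bound y c : Val y c -> nc c <= nrm y.
Proof.
case=> F e; have := nrmM (Q F) y; rewrite e nrmZ.
have hp : 0 < nrm (Q F).
  by rewrite lt_def nrm_ge0 andbT; apply/eqP => /nrm_eq0; apply: Q_ne0.
by rewrite mulrC ler_pM2l.
Qed.

Lemma Val_add y c y' c' : Val y c -> Val y' c' -> Val (y + y') (c + c').
Proof. move=> h h'; case: (Val2 h h') => F [e e']; exists F; by rewrite /ValF mmDr e e' scalerDl. Qed.
Lemma Val_scale k y c : Val y c -> Val (k *: y) (k * c).
Proof. by case=> F e; exists F; rewrite /ValF mmZr e scalerA. Qed.
Lemma Val_mul y c y' c' : Val y c -> Val y' c' -> Val (mul y y') (c * c').
Proof. move=> h h'; case: (Val2 h h') => F [e e']; exists F; by rewrite /ValF mmA e mmZl e' scalerA. Qed.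
Lemma Val_0 : Val 0 0. Proof. by exists [::]; rewrite /ValF mm0r scale0r. Qed.
Lemma Val_E i : Val (E i) (chi i)%:R.
Proof.
exists [:: i]; rewrite /ValF /Q /lit /= /Mop /=; case: (chi i) => /=.
  by rewrite mulr1n scale1r -mmA -hCm0 mmA EE.
by rewrite mulr0n scale0r mmBl -mmA -hCm0 mmA EE hCm0 subrr.
Qed.
Lemma Val_x0 : Val x0 1. Proof. by exists [::]; rewrite /ValF /Q /= hid0 scale1r. Qed.
Lemma Val_span G y : spanF G y -> exists c, Val y c.
Proof.
elim=> [i _|||k x _ [c h]|x y' _ [c h] _ [c' h']].
- by exists (chi i)%:R; apply: Val_E.
- by exists 0; apply: Val_0.
- by move=> x z _ [c h] _ [c' h']; exists (c + c'); apply: Val_add.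
- by exists (k * c); apply: Val_scale.
- by exists (c * c'); apply: Val_mul.
Qed.
Lemma Val_spanS y : Span y -> exists c, Val y c.
Proof. by case=> G h; apply: Val_span h. Qed.

Definition gS (pr : R[i] -> R) x :=
  [set r : R | exists y c, Val y c /\ r = pr c - nrm (x - y)].
Definition g pr x := sup (gS pr x).

Section G.
Variable pr : R[i] -> R.
Hypotheses (prB : forall c c', pr (c - c') = pr c - pr c') (prle : forall c, pr c <= nc c).

Lemma gS_has x : has_sup (gS pr x).
Proof.
split; first by exists (pr 0 - nrm (x - 0)); exists 0, 0; split=> //; exact: Val_0.
exists (nrm x) => r [y [c [h ->]]].
have := prle c; have := Val_bound h; have := nrm_tri y x 0; rewrite !subr0 nrmB.
lra.
Qed.

Lemma g_val y c : Val y c -> g pr y = pr c.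
Proof.
move=> h; apply/eqP; rewrite eq_le; apply/andP; split.
  apply: ge_sup; first by case: (gS_has y).
  move=> r [y' [c' [h' ->]]].
  have hv : Val (y' - y) (c' - c).
    by rewrite -scaleN1r -[c' - c]addrC -[- c]mulN1r addrC; apply: Val_add => //; apply: Val_scale.
  have := Val_bound hv; have := prle (c' - c); rewrite prB nrmB; lra.
apply: sup_upper_bound; first exact: gS_has.
by exists y, c; split=> //; rewrite subrr nrm0 subr0.
Qed.

Lemma g_lip x x' : g pr x <= g pr x' + nrm (x - x').
Proof.
apply: ge_sup; first by case: (gS_has x).
move=> r [y [c [h ->]]].
have : pr c - nrm (x' - y) <= g pr x'.
  by apply: sup_upper_bound; [exact: gS_has|exists y, c].
have := nrm_tri x' x y; rewrite (nrmB x' x); lra.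
Qed.
End G.

Definition phi x : R[i] := (g (@complex.Re R) x) +i* (g (@complex.Im R) x).

Lemma phi_val y c : Val y c -> phi y = c.
Proof.
move=> h; rewrite /phi (g_val Re_B (@Re_le R) h) (g_val Im_B (@Im_le R) h).
by case: c {h}.
Qed.

Lemma phi_lip x x' : nc (phi x - phi x') <= 2 * nrm (x - x').
Proof.
have -> : phi x - phi x' = (g (@complex.Re R) x - g (@complex.Re R) x')
   +i* (g (@complex.Im R) x - g (@complex.Im R) x') by [].
apply: (le_trans (nc_le _ _)).
have h1 := g_lip (@Re_le R) x x'; have h2 := g_lip (@Re_le R) x' x.
have h3 := g_lip (@Im_le R) x x'; have h4 := g_lip (@Im_le R) x' x.
rewrite (nrmB x' x) in h2 h4.
have : `|g (@complex.Re R) x - g (@complex.Re R) x'| <= nrm (x - x').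
  by rewrite ler_norml; apply/andP; split; lra.
have : `|g (@complex.Im R) x - g (@complex.Im R) x'| <= nrm (x - x').
  by rewrite ler_norml; apply/andP; split; lra.
lra.
Qed.


Lemma phi_add x x' : clS x -> clS x' -> phi (x + x') = phi x + phi x'.
Proof.
move=> hx hx'; apply/eqP; rewrite -subr_eq0; apply/eqP; apply: nc_zero => e he.
have he8 : 0 < e / 8 by rewrite divr_gt0.
case: (hx _ he8) => y [hy hxy]; case: (hx' _ he8) => y' [hy' hxy'].
case: (Val_spanS hy) => c hc; case: (Val_spanS hy') => c' hc'.
have e1 : phi (y + y') = phi y + phi y'.
  by rewrite (phi_val (Val_add hc hc')) (phi_val hc) (phi_val hc').
have -> : phi (x + x') - (phi x + phi x') =
   (phi (x + x') - phi (y + y')) - (phi x - phi y) - (phi x' - phi y').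
  by rewrite e1; ring.
have f1 := nc_sub_le (phi (x + x') - phi (y + y') - (phi x - phi y)) (phi x' - phi y').
have f2 := nc_sub_le (phi (x + x') - phi (y + y')) (phi x - phi y).
have h1 := phi_lip (x + x') (y + y'); have h2 := phi_lip x y; have h3 := phi_lip x' y'.
have h4 := nrm_subD x x' y y'.
lra.
Qed.

Lemma phi_scale k x : clS x -> phi (k *: x) = k * phi x.
Proof.
move=> hx; apply/eqP; rewrite -subr_eq0; apply/eqP; apply: nc_zero => e he.
have he4 : 0 < e / 4 by rewrite divr_gt0.
have hnk := nc_ge0 k.
case: (hx _ (div_pos hnk he4)) => y [hy hxy].
case: (Val_spanS hy) => c hc.
have e1 : phi (k *: y) = k * phi y by rewrite (phi_val (Val_scale k hc)) (phi_val hc).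
have -> : phi (k *: x) - k * phi x = (phi (k *: x) - phi (k *: y)) - k * (phi x - phi y).
  by rewrite e1; ring.
have f1 := nc_sub_le (phi (k *: x) - phi (k *: y)) (k * (phi x - phi y)).
rewrite nc_mul in f1.
have h1 := phi_lip (k *: x) (k *: y); rewrite -scalerBr nrmZ in h1.
have h2 := phi_lip x y.
have h3 : nc k * nc (phi x - phi y) <= nc k * (2 * nrm (x - y)) by apply: ler_wpM2l.
have h4 := small_div hnk (nrm_ge0 _) hxy.
lra.
Qed.

Lemma phi_mul x x' : clS x -> clS x' -> phi (mul x x') = phi x * phi x'.
Proof.
move=> hx hx'; apply/eqP; rewrite -subr_eq0; apply/eqP; apply: nc_zero => e he.
have he4 : 0 < e / 4 by rewrite divr_gt0.
have he8 : 0 < e / 8 by rewrite divr_gt0.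
have ha : 0 <= nrm x + nc (phi x) by rewrite addr_ge0 ?nrm_ge0 ?nc_ge0.
case: (hx' _ (div_pos ha he4)) => y' [hy' hxy'].
case: (hx _ (div_pos (nrm_ge0 y') he8)) => y [hy hxy].
case: (Val_spanS hy) => c hc; case: (Val_spanS hy') => c' hc'.
have e1 : phi (mul y y') = phi y * phi y'.
  by rewrite (phi_val (Val_mul hc hc')) (phi_val hc) (phi_val hc').
have -> : phi (mul x x') - phi x * phi x' =
   (phi (mul x x') - phi (mul y y')) + (phi y - phi x) * phi y' + phi x * (phi y' - phi x').
  by rewrite e1; ring.
set z1 := phi (mul x x') - phi (mul y y').
set z2 := (phi y - phi x) * phi y'.
set z3 := phi x * (phi y' - phi x').
have f1 : nc (z1 + z2 + z3) <= nc z1 + nc z2 + nc z3.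
  apply: (le_trans (le_normcD _ _)); rewrite lerD2r; exact: le_normcD.
have f2 : nc z1 <= 2 * (nrm x * nrm (x' - y') + nrm (x - y) * nrm y').
  apply: (le_trans (phi_lip _ _)); rewrite ler_pM2l //; exact: mul_diff.
have f3 : nc z2 <= 2 * nrm (x - y) * nrm y'.
  rewrite /z2 nc_mul; apply: ler_pM; rewrite ?nc_ge0 //.
    by rewrite nrmB; apply: phi_lip.
  by rewrite (phi_val hc'); apply: Val_bound hc'.
have f4 : nc z3 <= nc (phi x) * (2 * nrm (x' - y')).
  rewrite /z3 nc_mul; apply: ler_wpM2l; first exact: nc_ge0.
  by rewrite nrmB; apply: phi_lip.
have f5 := small_div ha (nrm_ge0 _) hxy'.
have f6 := small_div (nrm_ge0 y') (nrm_ge0 _) hxy.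
rewrite mulrDl in f5.
lra.
Qed.

Lemma phi_char : is_character mul (Cstar_gen mul st nrm E) phi.
Proof.
split.
- by move=> a b ha hb; apply: phi_add; apply: Cstar_clS.
- by move=> k a ha; apply: phi_scale; apply: Cstar_clS.
- by move=> a b ha hb; apply: phi_mul; apply: Cstar_clS.
- exists x0; split=> //; rewrite (phi_val Val_x0); apply/eqP; exact: oner_neq0.
Qed.

Lemma phi_x0 y c : mul x0 y = c *: x0 -> phi y = c.
Proof. by move=> h; apply: phi_val; exists [::]. Qed.

End Max2.

Lemma char_exists : exists phi : A -> R[i],
  [/\ is_character mul (Cstar_gen mul st nrm E) phi,
      forall x x', nc (phi x - phi x') <= 2 * nrm (x - x')
    & forall y c, mul x0 y = c *: x0 -> phi y = c].
Proof.
case: exists_max => L [hL hmax]; exists (phi L).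
split; [exact: phi_char|exact: phi_lip|exact: phi_x0].
Qed.

End Char.


Definition Bst := Cstar_gen mul st nrm E.

Lemma Cstar_add x y : Bst x -> Bst y -> Bst (x + y).
Proof. by move=> hx hy; rewrite /Bst /Cstar_gen => S h1 h2 h3 h4 h5 h6 h7; apply: (h3); [exact: (hx S h1 h2 h3 h4 h5 h6 h7)|exact: (hy S h1 h2 h3 h4 h5 h6 h7)]. Qed.
Lemma Cstar_scale k x : Bst x -> Bst (k *: x).
Proof. by move=> hx; rewrite /Bst /Cstar_gen => S h1 h2 h3 h4 h5 h6 h7; apply: (h4); exact: (hx S h1 h2 h3 h4 h5 h6 h7). Qed.

Lemma ring_Cstar x : ring_gen mul E x -> Bst x.
Proof.
move=> hx; rewrite /Bst /Cstar_gen => S h1 h2 h3 h4 h5 h6 h7; elim: hx.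
- exact: h1.
- exact: h2.
- by move=> y _ hy; rewrite -scaleN1r; apply: h4.
- by move=> y z _ hy _ hz; apply: h3.
- by move=> y z _ hy _ hz; apply: h5.
Qed.

Lemma char_0 (ph : A -> R[i]) : is_character mul Bst ph -> ph 0 = 0.
Proof.
case=> _ hs _ _; have h0 : Bst 0 by rewrite /Bst /Cstar_gen => S h1 h2.
by rewrite -(scale0r (0:A)) hs // mul0r.
Qed.

Lemma ring_int (ph : A -> R[i]) x : is_character mul Bst ph ->
  ring_gen mul E x -> exists z : int, ph x = z%:~R.
Proof.
move=> hc; have [ha hs hm _] := hc; elim.
- move=> i; have hB : Bst (E i) by apply: ring_Cstar; apply: rg_gen.
  have : ph (E i) * ph (E i) = ph (E i) by rewrite -hm // EE.
  move/eqP; rewrite -subr_eq0 -[X in _ - X]mulr1 -mulrBr mulf_eq0 subr_eq0.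
  by case/orP => /eqP ->; [exists 0|exists 1].
- by exists 0; rewrite char_0.
- move=> y hy [z hz]; exists (- z).
  by rewrite -[- y]scaleN1r hs ?hz ?mulN1r ?intrN //; apply: ring_Cstar.
- move=> y y' hy [z hz] hy' [z' hz']; exists (z + z').
  by rewrite ha ?hz ?hz' ?intrD //; apply: ring_Cstar.
- move=> y y' hy [z hz] hy' [z' hz']; exists (z * z').
  by rewrite hm ?hz ?hz' ?intrM //; apply: ring_Cstar.
Qed.

Lemma Aat_mul_span F bs b c : spanF F b -> T (zip F bs) b = c *: Aat F bs ->
  mul (Aat F bs) b = c *: Aat F bs.
Proof.
move=> hb; rewrite /Aat; case: (pick F bs) => [j|] h; last by rewrite mm0l scaler0.
rewrite -T_mulr (Cm_span hb) T_mulr h mmZl -T_mulr EE; by [].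
Qed.

Lemma approx x e : Bst x -> 0 < e -> exists F b cf,
  [/\ nrm (x - b) < e, b = SS (bassign (size F)) (Aat F) cf &
      forall bs, bs \in bassign (size F) -> Aat F bs <> 0 ->
        exists ph : A -> R[i], [/\ is_character mul Bst ph,
          forall y y', nc (ph y - ph y') <= 2 * nrm (y - y') & ph b = cf bs]].
Proof.
move=> hx he; case: (Cstar_clS hx he) => b [[F hbF] hxb].
have : forall bs, exists c, size bs = size F -> T (zip F bs) b = c *: Aat F bs.
  move=> bs; have [hs|hs] := eqVneq (size bs) (size F).
    by case: (span_val hbF hs) => c hc; exists c.
  by exists 0 => /eqP; rewrite (negPf hs).
case/choice => cf hcf; exists F, b, cf; split=> //.
  rewrite {1}(T_decomp F b) /SS big_seq [RHS]big_seq; apply: eq_bigr => bs hbs.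
  by rewrite (hcf bs (size_bassign hbs)).
move=> bs hbs hn0.
have hc := hcf bs (size_bassign hbs).
have [ph [hph hlip hval]] := char_exists hn0 (Aat_Cm F bs) (Aat_idem F bs)
   (ring_Cstar (ring_Aat F bs)).
by exists ph; split=> //; apply: hval; apply: Aat_mul_span.
Qed.

Lemma SS_sub F (f g : seq bool -> R[i]) :
  SS (bassign (size F)) (Aat F) f - SS (bassign (size F)) (Aat F) g
  = SS (bassign (size F)) (Aat F) (fun bs => f bs - g bs).
Proof. by rewrite /SS -sumrB; apply: eq_bigr => bs _; rewrite scalerBl. Qed.

Lemma nrm_SS_F F d m : 0 <= m ->
  (forall bs, bs \in bassign (size F) -> Aat F bs != 0 -> nc (d bs) <= m) ->
  nrm (SS (bassign (size F)) (Aat F) d) <= m.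
Proof.
move=> hm hd; apply: nrm_SS_le => //.
- exact: uniq_bassign.
- by move=> bs _; apply: Aat_idem.
- by move=> bs _; apply: Aat_st.
- by move=> bs bs' h h' hne; apply: Aat_orth.
Qed.

Lemma ncZ_small (z : int) : nc (z%:~R) < 1 -> z = 0.
Proof.
move=> h; apply/eqP; apply: contraLR h => hz; rewrite -leNgt; exact: ncZ.
Qed.

Lemma C0_ring a : C0_int mul st nrm E a -> ring_gen mul E a.
Proof.
case=> hB hint.
have h8 : 0 < 8^-1 :> R by rewrite invr_gt0.
case: (approx hB h8) => F [b [cf [hab hb hchar]]].
have : forall bs, exists z : int, bs \in bassign (size F) -> Aat F bs != 0 ->
    nc (cf bs - z%:~R) <= 4^-1.
  move=> bs; have [h0|hn0] := eqVneq (Aat F bs) 0; first by exists 0.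
  have hbs := pselect (bs \in bassign (size F)).
  case: hbs => hbs; last by exists 0.
  case: (hchar bs hbs (elimN eqP hn0)) => ph [hph hlip hval].
  case: (hint ph hph) => z hz; exists z => _ _.
  have := hlip b a; rewrite hval hz nrmB; lra.
case/choice => nf hnf.
pose r := SS (bassign (size F)) (Aat F) (fun bs => (nf bs)%:~R).
have hr : ring_gen mul E r.
  rewrite /r /SS; elim: (bassign (size F)) => [|bs s IH]; first by rewrite big_nil; apply: rg_0.
  rewrite big_cons; apply: rg_add => //; rewrite scaler_int.
  have hA := ring_Aat F bs; case: (nf bs) => n.
    by elim: n => [|n IHn]; [rewrite mulr0z; apply: rg_0|rewrite -pmulrn mulrS; apply: rg_add => //; rewrite pmulrn].
  rewrite NegzE mulrNz; apply: rg_opp.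
  elim: n => [|n IHn]; first by rewrite -pmulrn mulr1n.
  by rewrite -pmulrn mulrS; apply: rg_add => //; rewrite pmulrn.
have hbr : nrm (b - r) <= 4^-1.
  rewrite hb /r SS_sub; apply: nrm_SS_F; first by rewrite invr_ge0.
  by move=> bs hbs hn0; exact: hnf.
have hd : nrm (a - r) < 2^-1.
  have := nrm_tri a b r; lra.
suff : a - r = 0 by move/eqP; rewrite subr_eq0 => /eqP ->.
set d := a - r.
have hBd : Bst d by rewrite /d -[- r]scaleN1r; apply: Cstar_add => //; apply: Cstar_scale; apply: ring_Cstar.
have hphi : forall ph, is_character mul Bst ph ->
    (forall y y', nc (ph y - ph y') <= 2 * nrm (y - y')) -> ph d = 0.
  move=> ph hph hlip; have [ha hs _ _] := hph.
  case: (hint ph hph) => z hz; case: (ring_int hph hr) => z' hz'.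
  have e1 : ph d = (z - z')%:~R.
    rewrite /d -[- r]scaleN1r ha //; last by apply: Cstar_scale; apply: ring_Cstar.
    rewrite hs; last exact: ring_Cstar.
    by rewrite hz hz' intrB mulN1r.
  have := hlip d 0; rewrite char_0 // subr0 subr0 e1 => h.
  have : nc ((z - z')%:~R) < 1 by lra.
  by move/ncZ_small => ->.
apply: nrm_eq0; apply/eqP; rewrite eq_le nrm_ge0 andbT.
apply/negP => /negP; rewrite -ltNge => hpos.
have he : 0 < nrm d / 6 by rewrite divr_gt0.
case: (approx hBd he) => F' [b' [cf' [hdb' hb' hchar']]].
have hb'n : nrm b' <= 2 * (nrm d / 6).
  rewrite hb'; apply: nrm_SS_F; first by rewrite mulr_ge0 // ltW.
  move=> bs hbs /eqP hn0; case: (hchar' bs hbs hn0) => ph [hph hlip hval].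
  have := hlip b' d; rewrite hval (hphi ph hph hlip) subr0 nrmB; lra.
have := nrm_tri d b' 0; rewrite !subr0; lra.
Qed.

Lemma ring_C0 a : ring_gen mul E a -> C0_int mul st nrm E a.
Proof.
move=> h; split; first exact: ring_Cstar.
by move=> ph hph; apply: ring_int.
Qed.


Lemma ring_mulz x (z : int) : ring_gen mul E x -> ring_gen mul E (x *~ z).
Proof.
move=> hx; have hpos : forall n : nat, ring_gen mul E (x *+ n).
  by elim=> [|n IHn]; [rewrite mulr0n; apply: rg_0|rewrite mulrS; apply: rg_add].
case: z => n; first by rewrite -pmulrn.
by rewrite NegzE mulrNz; apply: rg_opp; rewrite -pmulrn.
Qed.

Lemma Zspan_ring a : Zspan E a -> ring_gen mul E a.
Proof.
case=> s ->; elim: s => [|p s IH]; first by rewrite big_nil; apply: rg_0.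
by rewrite big_cons; apply: rg_add => //; apply: ring_mulz; apply: rg_gen.
Qed.

Lemma mulz_mul x y (n m : int) : mul (x *~ n) (y *~ m) = mul x y *~ (n * m).
Proof. by rewrite -(scaler_int n x) -(scaler_int m y) -(scaler_int (n * m)) mmZl mmZr scalerA intrM mulrC. Qed.

Lemma ring_Zspan (hk : forall i j, exists k, mul (E i) (E j) = E k) a :
  ring_gen mul E a -> Zspan E a.
Proof.
have : forall ij : I * I, exists k, mul (E ij.1) (E ij.2) = E k by move=> [i j]; apply: hk.
case/choice => kf hkf.
elim.
- by move=> i; exists [:: (1, i)]; rewrite big_seq1 mulr1z.
- by exists [::]; rewrite big_nil.
- move=> x _ [s ->]; exists [seq (- p.1, p.2) | p <- s].
  by rewrite big_map -sumrN; apply: eq_bigr => p _; rewrite mulrNz.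
- move=> x y _ [s ->] _ [t ->]; exists (s ++ t); by rewrite big_cat.
- move=> x y _ [s ->] _ [t ->].
  exists [seq (p.1 * q.1, kf (p.2, q.2)) | p <- s, q <- t].
  rewrite big_allpairs_dep mm_suml; apply: eq_bigr => p _.
  rewrite mm_sumr; apply: eq_bigr => q _ /=.
  by rewrite mulz_mul (hkf (p.2, q.2)).
Qed.

End Main.

Theorem lemma4p3 (R : realType) (A : lmodType R[i])
    (mul : A -> A -> A) (st : A -> A) (nrm : A -> R)
    (HA : is_Cstar_algebra mul st nrm)
    (I : Type) (E : I -> A)
    (Eproj : forall i, mul (E i) (E i) = E i /\ st (E i) = E i)
    (Ecomm : forall i j, mul (E i) (E j) = mul (E j) (E i)) :
  (forall a, C0_int mul st nrm E a <-> ring_gen mul E a) /\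
  ((forall i j, exists k, mul (E i) (E j) = E k) ->
   forall a, C0_int mul st nrm E a <-> Zspan E a).
Proof.
have h1 : forall a, C0_int mul st nrm E a <-> ring_gen mul E a.
  move=> a; split; [exact: (C0_ring HA Eproj Ecomm)|exact: (ring_C0 nrm Eproj)].
split=> // hk a; rewrite h1; split; [exact: (ring_Zspan HA hk)|exact: (Zspan_ring mul)].
Qed.
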